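(* Let $F$ be an algebraically closed field with $\operatorname{char}F=3$, $R=F[[x,y]]$, and let $f\in R^2$ be a unimodal isolated complete intersection singularity with $\operatorname{ord}(f)=3$. Then $j_3(f)$ is contact equivalent (under the $3$-jet contact group acting on $R^2/\mathfrak m^4R^2$) to one of $(x^3,0)$, $(x^3,x^2y)$, $(x^3,xy^2)$, $(x^3,y^3+xy^2)$, $(x^3,y^3+x^2y)$, $(x^3,y^3)$, $(x^2y,0)$, $(x^2y,xy^2)$, $(x^2y,x^3+xy^2)$, $(x^2y,y^3+xy^2)$, $(x^3+x^2y,\,y^3+\lambda xy^2)$ with $\lambda\neq 1$, $(x^3+xy^2,0)$.
   Context: $\mathfrak m=\langle x,y\rangle$. ICIS: $f_1,f_2\in\mathfrak m$ a regular sequence with $\mathfrak m^k\subset\langle f_1,f_2\rangle+I_2(J(f))$ for some $k$. $\operatorname{ord}(f)=\min\operatorname{ord}f_i$. $j_3(f)$ is the image in $J_3=R^2/\mathfrak m^4R^2$, on which $\mathcal K_3=\{(j_3(U),j_3(\phi))\}$ ($U\in GL(2,R)$, $\phi\in\operatorname{Aut}(R)$) acts by $j_3(f)\mapsto j_3(U\cdot\phi(f))$. Unimodal means $\mathcal K$-modality $1$ (modality in the sense of Arnold, Greuel–Nguyen, of a sufficiently high jet under the contact jet group). *)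

(* Defs.v *)
From mathcomp Require Import all_boot all_order all_algebra.
Unset Printing Implicit Defensive.
Import GRing.Theory.
Local Open Scope ring_scope.

Section Defs.
Variable F : closedFieldType.

(* a power series is its coefficient function: g i j = coeff of x^i y^j *)
Definition ps := nat -> nat -> F.

Definition pzero : ps := fun _ _ => 0.
Definition pconst (c : F) : ps := fun i j => if (i == 0)%N && (j == 0)%N then c else 0.
Definition pone : ps := pconst 1.
Definition padd (f g : ps) : ps := fun i j => f i j + g i j.
Definition pneg (f : ps) : ps := fun i j => - f i j.
Definition pscale (c : F) (f : ps) : ps := fun i j => c * f i j.
Definition pmul (f g : ps) : ps := fun i j =>
  \sum_(a < i.+1) \sum_(b < j.+1) f a b * g (i - a)%N (j - b)%N.
Definition mono (a b : nat) : ps :=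
  fun i j => if (i == a) && (j == b) then 1 else 0.
Definition pdx (f : ps) : ps := fun i j => i.+1%:R * f i.+1 j.
Definition pdy (f : ps) : ps := fun i j => j.+1%:R * f i j.+1.

Definition in_mpow (k : nat) (g : ps) : Prop :=
  forall i j, (i + j < k)%N -> g i j = 0.

Definition o0 : 'I_2 := ord0.
Definition o1 : 'I_2 := ord_max.
Definition vec2 (a b : ps) : 'I_2 -> ps := fun i => if i == o0 then a else b.

Definition pmat := 'I_2 -> 'I_2 -> ps.
Definition mat_vec (U : pmat) (g : 'I_2 -> ps) : 'I_2 -> ps :=
  fun i => padd (pmul (U i o0) (g o0)) (pmul (U i o1) (g o1)).
Definition mat_mul (U V : pmat) : pmat :=
  fun i k => padd (pmul (U i o0) (V o0 k)) (pmul (U i o1) (V o1 k)).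
Definition mat_one : pmat := fun i k => if i == k then pone else pzero.
Definition GL2 (U : pmat) : Prop :=
  exists V : pmat, mat_mul U V = mat_one /\ mat_mul V U = mat_one.

Definition is_aut (phi : ps -> ps) : Prop :=
  (forall a b, phi (padd a b) = padd (phi a) (phi b)) /\
  (forall a b, phi (pmul a b) = pmul (phi a) (phi b)) /\
  (forall c a, phi (pscale c a) = pscale c (phi a)) /\
  phi pone = pone /\
  (exists psi : ps -> ps, cancel phi psi /\ cancel psi phi).

Definition kact (U : pmat) (phi : ps -> ps) (f : 'I_2 -> ps) : 'I_2 -> ps :=
  mat_vec U (fun i => phi (f i)).

Definition jacdet (f : 'I_2 -> ps) : ps :=
  padd (pmul (pdx (f o0)) (pdy (f o1))) (pneg (pmul (pdy (f o0)) (pdx (f o1)))).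

Definition regular_seq (f1 f2 : ps) : Prop :=
  (forall a, pmul a f1 = pzero -> a = pzero) /\
  (forall a, (exists b, pmul a f2 = pmul b f1) -> exists c, a = pmul c f1) /\
  ~ (exists a b, padd (pmul a f1) (pmul b f2) = pone).

Definition ICIS (f : 'I_2 -> ps) : Prop :=
  in_mpow 1 (f o0) /\ in_mpow 1 (f o1) /\ regular_seq (f o0) (f o1) /\
  exists k, forall g, in_mpow k g ->
    exists a b c, g = padd (padd (pmul a (f o0)) (pmul b (f o1))) (pmul c (jacdet f)).

Definition ord_eq3 (f : 'I_2 -> ps) : Prop :=
  in_mpow 3 (f o0) /\ in_mpow 3 (f o1) /\ ~ (in_mpow 4 (f o0) /\ in_mpow 4 (f o1)).

Definition jcoord (k : nat) := {t : 'I_2 * nat * nat | (t.1.2 + t.2 <= k)%N}.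
Definition jet (k : nat) (f : 'I_2 -> ps) : jcoord k -> F :=
  fun c => f (val c).1.1 (val c).1.2 (val c).2.

Definition Korbit (k : nat) (p q : jcoord k -> F) : Prop :=
  exists (g : 'I_2 -> ps) (U : pmat) (phi : ps -> ps),
    jet k g = p /\ GL2 U /\ is_aut phi /\ q = jet k (kact U phi g).

End Defs.
Arguments pzero {F}. Arguments pconst {F}. Arguments pone {F}. Arguments padd {F}.
Arguments pneg {F}. Arguments pscale {F}. Arguments pmul {F}. Arguments mono {F}.
Arguments pdx {F}. Arguments pdy {F}. Arguments in_mpow {F}. Arguments vec2 {F}.
Arguments mat_vec {F}. Arguments mat_mul {F}. Arguments mat_one {F}. Arguments GL2 {F}.
Arguments is_aut {F}. Arguments kact {F}. Arguments jacdet {F}. Arguments regular_seq {F}.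
Arguments ICIS {F}. Arguments ord_eq3 {F}. Arguments jet {F} k f _. Arguments Korbit {F} k p q.

Section Zariski.
Variables (F : fieldType) (V : Type).

Inductive pexpr : Type :=
| PVar of V | PConst of F | PAdd of pexpr & pexpr | PMul of pexpr & pexpr.

Fixpoint peval (x : V -> F) (p : pexpr) : F :=
  match p with
  | PVar v => x v
  | PConst c => c
  | PAdd p q => peval x p + peval x q
  | PMul p q => peval x p * peval x q
  end.

Definition pt := V -> F.
Definition subs (A B : pt -> Prop) := forall x, A x -> B x.

Definition zclosed (Z : pt -> Prop) : Prop :=
  exists P : pexpr -> Prop, forall x, Z x <-> (forall p, P p -> peval x p = 0).
Definition zopen (U : pt -> Prop) : Prop := zclosed (fun x => ~ U x).
Definition zclosure (S : pt -> Prop) : pt -> Prop :=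
  fun x => forall Z, zclosed Z -> subs S Z -> Z x.
Definition zirreducible (Z : pt -> Prop) : Prop :=
  zclosed Z /\ (exists x, Z x) /\
  forall Z1 Z2, zclosed Z1 -> zclosed Z2 -> subs Z (fun x => Z1 x \/ Z2 x) ->
    subs Z Z1 \/ subs Z Z2.

Definition has_chain (S : pt -> Prop) (n : nat) : Prop :=
  exists Zs : nat -> pt -> Prop,
    (forall i, (i <= n)%N -> zirreducible (Zs i) /\ subs (Zs i) (zclosure S)) /\
    (forall i, (i < n)%N -> subs (Zs i) (Zs i.+1) /\ exists x, Zs i.+1 x /\ ~ Zs i x).

Definition dim_is (S : pt -> Prop) (n : nat) : Prop :=
  has_chain S n /\ ~ has_chain S n.+1.

(* Modality (Greuel-Nguyen): for U open,
   G-mod(U) = max_t (dim U(t) - t), U(t) = {y in U | dim G.y = t},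
   and G-mod(x) = min over open neighbourhoods U of x of G-mod(U).
   The group action is given through its orbit relation. *)
Definition stratum (orb : pt -> pt -> Prop) (U : pt -> Prop) (t : nat) : pt -> Prop :=
  fun y => U y /\ dim_is (orb y) t.

Definition mod_open_is (orb : pt -> pt -> Prop) (U : pt -> Prop) (v : int) : Prop :=
  (exists t d, (exists y, stratum orb U t y) /\ dim_is (stratum orb U t) d /\
               v = (d%:Z - t%:Z)%R) /\
  (forall t d, (exists y, stratum orb U t y) -> dim_is (stratum orb U t) d ->
               ((d%:Z - t%:Z) <= v)%R).

Definition modality_is (orb : pt -> pt -> Prop) (x : pt) (m : int) : Prop :=
  (exists U, zopen U /\ U x /\ mod_open_is orb U m) /\
  (forall U v, zopen U -> U x -> mod_open_is orb U v -> (m <= v)%R).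

End Zariski.
Arguments PVar {F V}. Arguments PConst {F V}. Arguments peval {F V}. Arguments zclosed {F V}.
Arguments zopen {F V}. Arguments zclosure {F V}. Arguments zirreducible {F V}.
Arguments has_chain {F V}. Arguments dim_is {F V}. Arguments stratum {F V}.
Arguments mod_open_is {F V}. Arguments modality_is {F V}.

Definition unimodal (F : closedFieldType) (f : 'I_2 -> ps F) : Prop :=
  exists k0, forall k, (k0 <= k)%N ->
    modality_is (Korbit k) (jet k f) 1%R.

Definition nf_list (F : closedFieldType) (g : 'I_2 -> ps F) : Prop :=
  let x3 := mono 3 0 in let x2y := mono 2 1 in
  let xy2 := mono 1 2 in let y3 := mono 0 3 in
  let z := @pzero F in
     g = vec2 x3 z
  \/ g = vec2 x3 x2y
  \/ g = vec2 x3 xy2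
  \/ g = vec2 x3 (padd y3 xy2)
  \/ g = vec2 x3 (padd y3 x2y)
  \/ g = vec2 x3 y3
  \/ g = vec2 x2y z
  \/ g = vec2 x2y xy2
  \/ g = vec2 x2y (padd x3 xy2)
  \/ g = vec2 x2y (padd y3 xy2)
  \/ (exists lam : F, lam != 1 /\ g = vec2 (padd x3 x2y) (padd y3 (pscale lam xy2)))
  \/ g = vec2 (padd x3 xy2) z.
Arguments unimodal {F}. Arguments nf_list {F}.

(* Main.v *)
Require Import Defs.
From mathcomp Require Import all_boot all_order all_algebra.
From mathcomp Require Import ring zify.
From Stdlib Require Import FunctionalExtensionality.
Import GRing.Theory.
Local Open Scope ring_scope.
Section Basics.
Variable F : closedFieldType.
Local Notation ps := (ps F).
Lemma ps_ext (f g : ps) : (forall i j, f i j = g i j) -> f = g.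
Proof. move=> H; apply: functional_extensionality => i; apply: functional_extensionality => j; exact: H. Qed.
Lemma pmul_constl (c : F) (h : ps) : pmul (pconst c) h = pscale c h.
Proof.
apply: ps_ext => i j; rewrite /pmul /pscale big_ord_recl big_ord_recl /=.
rewrite /pconst /= !subn0 big1 ?addr0; last first.
  by move=> k _; rewrite mul0r.
rewrite big1 ?addr0 // => a _; rewrite big1 // => b _.
by rewrite mul0r.
Qed.
End Basics.

Notation cub F := (prod (prod (prod (GRing.ClosedField.sort F) (GRing.ClosedField.sort F)) (GRing.ClosedField.sort F)) (GRing.ClosedField.sort F)).
Section Reach.
Variable F : closedFieldType.
Local Notation ps := (ps F).

Definition cubof (g : ps) : cub F := (g 3%N 0%N, g 2%N 1%N, g 1%N 2%N, g 0%N 3%N).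

Definition cm (a b c d : F) : pmat F := fun i k =>
  pconst (if i == o0 then (if k == o0 then a else b) else (if k == o0 then c else d)).

Definition Reach (P Q P' Q' : cub F) : Prop :=
  exists (a b c d : F) (phi : ps -> ps), a * d - b * c != 0 /\ is_aut phi /\
   forall g : 'I_2 -> ps, in_mpow 3 (g o0) -> in_mpow 3 (g o1) ->
     cubof (g o0) = P -> cubof (g o1) = Q ->
     in_mpow 3 (kact (cm a b c d) phi g o0) /\ in_mpow 3 (kact (cm a b c d) phi g o1) /\
     cubof (kact (cm a b c d) phi g o0) = P' /\ cubof (kact (cm a b c d) phi g o1) = Q'.

Lemma kact_cm a b c d phi (g : 'I_2 -> ps) :
  kact (cm a b c d) phi g o0 = (fun i j => a * phi (g o0) i j + b * phi (g o1) i j) /\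
  kact (cm a b c d) phi g o1 = (fun i j => c * phi (g o0) i j + d * phi (g o1) i j).
Proof. by rewrite /kact /mat_vec /cm /= !pmul_constl. Qed.

Lemma is_aut_id : is_aut (@id ps).
Proof. by do 4 (split => //); exists id. Qed.

Lemma is_aut_comp (phi psi : ps -> ps) : is_aut phi -> is_aut psi -> is_aut (phi \o psi).
Proof.
move=> [p1 [p2 [p3 [p4 [ip [ip1 ip2]]]]]] [q1 [q2 [q3 [q4 [iq [iq1 iq2]]]]]].
split; first by move=> a b /=; rewrite q1 p1.
split; first by move=> a b /=; rewrite q2 p2.
split; first by move=> a b /=; rewrite q3 p3.
split; first by rewrite /= q4 p4.
exists (iq \o ip); split => x /=; first by rewrite ip1 iq1.
by rewrite iq2 ip2.
Qed.

Lemma aut_lin (phi : ps -> ps) (a b : F) (u v : ps) : is_aut phi ->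
  phi (fun i j => a * u i j + b * v i j) = fun i j => a * phi u i j + b * phi v i j.
Proof.
move=> [p1 [_ [p3 _]]].
have -> : (fun i j => a * u i j + b * v i j) = padd (pscale a u) (pscale b v) by [].
by rewrite p1 !p3.
Qed.


Lemma I2_cases (i : 'I_2) : i = o0 \/ i = o1.
Proof. case: i => [[|[|//]]] Hi; [left|right]; exact: val_inj. Qed.

Lemma o1_neq : (o1 == o0) = false.
Proof. by []. Qed.

Lemma GL2_cm a b c d : a * d - b * c != 0 -> GL2 (cm a b c d).
Proof.
move=> Hd; set e := a * d - b * c.
exists (cm (d / e) (- b / e) (- c / e) (a / e)).
have key : forall (U V : pmat F) , (forall i k m n, mat_mul U V i k m n = mat_one i k m n) -> mat_mul U V = mat_one.
  move=> U V H; apply: functional_extensionality => i; apply: functional_extensionality => k.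
  by apply: ps_ext => m n; apply: H.
split; apply: key => i k m n; rewrite /mat_mul /cm !pmul_constl /padd /pscale /mat_one /pone /pzero;
  case: (I2_cases i) => ->; case: (I2_cases k) => ->; rewrite /= /pconst /=;
  case: ((m == 0)%N && (n == 0)%N); rewrite ?mulr0 ?addr0 //= ?mulr1; rewrite /e; field; exact: Hd.
Qed.

Lemma Reach_trans P Q P' Q' P'' Q'' : Reach P Q P' Q' -> Reach P' Q' P'' Q'' -> Reach P Q P'' Q''.
Proof.
move=> [a1 [b1 [c1 [d1 [phi1 [H1 [A1 R1]]]]]]] [a2 [b2 [c2 [d2 [phi2 [H2 [A2 R2]]]]]]].
exists (a2 * a1 + b2 * c1), (a2 * b1 + b2 * d1), (c2 * a1 + d2 * c1), (c2 * b1 + d2 * d1), (phi2 \o phi1).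
split.
  have -> : (a2 * a1 + b2 * c1) * (c2 * b1 + d2 * d1) - (a2 * b1 + b2 * d1) * (c2 * a1 + d2 * c1)
    = (a2 * d2 - b2 * c2) * (a1 * d1 - b1 * c1) by ring.
  by rewrite mulf_neq0.
split; first exact: is_aut_comp.
move=> g g0 g1 gP gQ.
have E : kact (cm (a2 * a1 + b2 * c1) (a2 * b1 + b2 * d1) (c2 * a1 + d2 * c1) (c2 * b1 + d2 * d1)) (phi2 \o phi1) g
   = kact (cm a2 b2 c2 d2) phi2 (kact (cm a1 b1 c1 d1) phi1 g).
  apply: functional_extensionality => k.
  case: (kact_cm a1 b1 c1 d1 phi1 g) => E10 E11.
  case: (kact_cm a2 b2 c2 d2 phi2 (kact (cm a1 b1 c1 d1) phi1 g)) => E20 E21.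
  case: (kact_cm (a2 * a1 + b2 * c1) (a2 * b1 + b2 * d1) (c2 * a1 + d2 * c1) (c2 * b1 + d2 * d1) (phi2 \o phi1) g) => E0 E1.
  case: (I2_cases k) => ->; [rewrite E0 E20 | rewrite E1 E21]; rewrite E10 E11 !aut_lin //=;
   apply: functional_extensionality => i; apply: functional_extensionality => j; ring.
rewrite E.
case: (R1 g g0 g1 gP gQ) => h0 [h1 [hP hQ]].
exact: R2.
Qed.

Lemma Reach_pencil P Q a b c d : a * d - b * c != 0 ->
  Reach P Q (a * P.1.1.1 + b * Q.1.1.1, a * P.1.1.2 + b * Q.1.1.2, a * P.1.2 + b * Q.1.2, a * P.2 + b * Q.2)
            (c * P.1.1.1 + d * Q.1.1.1, c * P.1.1.2 + d * Q.1.1.2, c * P.1.2 + d * Q.1.2, c * P.2 + d * Q.2).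
Proof.
move=> Hd; exists a, b, c, d, id; split => //; split; first exact: is_aut_id.
move=> g g0 g1 gP gQ; case: (kact_cm a b c d id g) => -> ->.
rewrite -gP -gQ /cubof /=; split; last split; last by [].
  by move=> i j Hij; rewrite g0 // g1 // !mulr0 addr0.
by move=> i j Hij; rewrite g0 // g1 // !mulr0 addr0.
Qed.

Lemma Reach_refl P Q : Reach P Q P Q.
Proof.
have H := @Reach_pencil P Q 1 0 0 1.
case: P H => [[[p1 p2] p3] p4]; case: Q => [[[q1 q2] q3] q4] /= H.
have : (1 : F) * 1 - 0 * 0 != 0 by rewrite mulr1 mulr0 subr0 oner_neq0.
move/H; by rewrite !mul1r !mul0r !addr0 !add0r.
Qed.

Definition coord_ok (phi : ps -> ps) (T : cub F -> cub F) : Prop :=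
  is_aut phi /\ forall g, in_mpow 3 g -> in_mpow 3 (phi g) /\ cubof (phi g) = T (cubof g).

Lemma Reach_coord phi T P Q : coord_ok phi T -> Reach P Q (T P) (T Q).
Proof.
move=> [Ha HT]; exists 1, 0, 0, 1, phi; split; first by rewrite mulr1 mulr0 subr0 oner_neq0.
split => // g g0 g1 gP gQ; case: (kact_cm 1 0 0 1 phi g) => -> ->.
case: (HT _ g0) => p0 c0; case: (HT _ g1) => p1 c1.
have E0 : (fun i j => 1 * phi (g o0) i j + 0 * phi (g o1) i j) = phi (g o0).
  by apply: ps_ext => i j; rewrite mul1r mul0r addr0.
have E1 : (fun i j => 0 * phi (g o0) i j + 1 * phi (g o1) i j) = phi (g o1).
  by apply: ps_ext => i j; rewrite mul1r mul0r add0r.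
by rewrite E0 E1 c0 c1 gP gQ.
Qed.

End Reach.
Arguments cubof {F}. Arguments cm {F}. Arguments Reach {F}. Arguments coord_ok {F}.

Section Gens.
Variable F : closedFieldType.
Local Notation ps := (ps F).

Definition sw (g : ps) : ps := fun i j => g j i.
Definition Tsw (P : cub F) : cub F := (P.2, P.1.2, P.1.1.2, P.1.1.1).

Lemma sw_ok : coord_ok sw Tsw.
Proof.
split; last first.
  move=> g Hg; split; first by move=> i j Hij; rewrite /sw Hg // addnC.
  by [].
split; first by [].
split.
  move=> g h; apply: ps_ext => i j; rewrite /sw /pmul exchange_big /=.
  by apply: eq_bigr => b _; apply: eq_bigr => a _.
split; first by [].
split; first by apply: ps_ext => i j; rewrite /sw /pone /pconst andbC.
by exists sw.
Qed.

Definition sc (al be : F) (g : ps) : ps := fun i j => al ^+ i * be ^+ j * g i j.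
Definition Tsc (al be : F) (P : cub F) : cub F :=
  (al ^+ 3 * P.1.1.1, al ^+ 2 * be * P.1.1.2, al * be ^+ 2 * P.1.2, be ^+ 3 * P.2).

Lemma sc_mul al be g h : sc al be (pmul g h) = pmul (sc al be g) (sc al be h).
Proof.
apply: ps_ext => i j; rewrite /sc /pmul mulr_sumr; apply: eq_bigr => [[a Ha]] _ /=.
rewrite mulr_sumr; apply: eq_bigr => [[b Hb]] _ /=.
have Ei : al ^+ i = al ^+ a * al ^+ (i - a) by rewrite -exprD subnKC.
have Ej : be ^+ j = be ^+ b * be ^+ (j - b) by rewrite -exprD subnKC.
rewrite Ei Ej; ring.
Qed.

Lemma sc_ok al be : al != 0 -> be != 0 -> coord_ok (sc al be) (Tsc al be).
Proof.
move=> Ha Hb; split; last first.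
  move=> g Hg; split; first by move=> i j Hij; rewrite /sc Hg // mulr0.
  by rewrite /cubof /Tsc /sc /= !expr0 !mulr1 !mul1r !expr1.
split; first by move=> g h; apply: ps_ext => i j; rewrite /sc /padd mulrDr.
split; first exact: sc_mul.
split; first by move=> c g; apply: ps_ext => i j; rewrite /sc /pscale; ring.
split; first by apply: ps_ext => i j; rewrite /sc /pone /pconst; case: i; case: j => //= *; rewrite ?mulr0 ?mulr1.
exists (sc al^-1 be^-1); split => g; apply: ps_ext => i j; rewrite /sc !exprVn;
  have Hi := expf_neq0 i Ha; have Hj := expf_neq0 j Hb; field; by rewrite Hi Hj.
Qed.

End Gens.
Arguments sw {F}. Arguments Tsw {F}. Arguments sc {F}. Arguments Tsc {F}.

Section Shear.
Variable F : closedFieldType.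
Local Notation ps := (ps F).
Local Notation PP := {poly {poly F}}.




Definition emb (N : nat) (g : ps) : PP := \poly_(a < N) \poly_(b < N) g a b.
Lemma coef_emb N g a b : (emb N g)`_a`_b = if (a < N)%N && (b < N)%N then g a b else 0.
Proof. by rewrite /emb coef_poly; case: (a < N)%N; rewrite ?coef_poly ?coef0. Qed.

Definition og (d : nat) (P : PP) := forall a b, (a + b < d)%N -> P`_a`_b = 0.

Lemma coefPP_M (P Q : PP) i j :
  (P * Q)`_i`_j = \sum_(a < i.+1) \sum_(b < j.+1) P`_a`_b * Q`_(i - a)`_(j - b).
Proof. by rewrite coefM coef_sum; apply: eq_bigr => a _; rewrite coefM. Qed.

Lemma og_le d e (P : PP) : (e <= d)%N -> og d P -> og e P.
Proof. by move=> Hed H a b Hab; apply: H; lia. Qed.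

Lemma og_add d (P Q : PP) : og d P -> og d Q -> og d (P + Q).
Proof. by move=> HP HQ a b Hab; rewrite !coefD (HP a b) // (HQ a b) // addr0. Qed.

Lemma og_sub d (P Q : PP) : og d P -> og d Q -> og d (P - Q).
Proof. by move=> HP HQ a b Hab; rewrite !coefB (HP a b) // (HQ a b) // subr0. Qed.

Lemma og_mul d e (P Q : PP) : og d P -> og e Q -> og (d + e) (P * Q).
Proof.
move=> HP HQ i j Hij; rewrite coefPP_M big1 // => [[a Ha]] _ /=.
rewrite big1 // => [[b Hb]] _ /=.
case: (ltnP (a + b) d) => Hd; first by rewrite (HP a b) // mul0r.
rewrite (HQ (i - a)%N (j - b)%N) ?mulr0 //; lia.
Qed.

Lemma og0 (P : PP) : og 0 P.
Proof. by []. Qed.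

Lemma og_sum d (I : finType) (G : I -> PP) : (forall i, og d (G i)) -> og d (\sum_i G i).
Proof.
move=> H a b Hab; rewrite coef_sum coef_sum big1 // => i _; exact: H.
Qed.

Definition Yv : PP := ('X)%:P.
Definition shq (t : F) : PP := 'X + t%:P%:P * Yv.
Definition shP t (P : PP) : PP := P \Po shq t.
Definition sh t (g : ps) : ps := fun i j => (shP t (emb (i + j).+1 g))`_i`_j.

Lemma og_shq t : og 1 (shq t).
Proof.
move=> a b Hab; have [-> ->] : a = 0%N /\ b = 0%N by lia.
by rewrite /shq /Yv !coefD coefX coefCM coefC /= coefC /= coefCM coefX mulr0 addr0.
Qed.

Lemma og_exp t n : og n (shq t ^+ n).
Proof.
elim: n => [|n IH]; first exact: og0.
rewrite exprS -add1n; apply: og_mul => //; exact: og_shq.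
Qed.

Lemma og_C d (P : PP) a : og d P -> og (d - a) (P`_a)%:P.
Proof.
move=> H a' b Hab; rewrite coefC; case: eqP => [Ha'|]; last by rewrite coef0.
apply: H; lia.
Qed.

Lemma og_shP t d (P : PP) : og d P -> og d (shP t P).
Proof.
move=> H; rewrite /shP comp_polyE.
apply: og_sum => a; rewrite -mul_polyC.
apply: (@og_le ((d - a) + a)); first lia.
apply: og_mul; [exact: og_C | exact: og_exp].
Qed.

Lemma shP_sub t (P Q : PP) : shP t (P - Q) = shP t P - shP t Q.
Proof. by rewrite /shP comp_polyB. Qed.

Lemma og_coef d (P : PP) a b : og d P -> (a + b < d)%N -> P`_a`_b = 0.
Proof. by move=> H; apply: H. Qed.

Lemma sh_loc t g i j N : (i + j < N)%N -> (shP t (emb N g))`_i`_j = sh t g i j.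
Proof.
move=> HN; rewrite /sh; apply/eqP; rewrite -subr_eq0 -coefB -coefB -shP_sub; apply/eqP.
apply: (@og_coef (i + j).+1) => //; apply: og_shP => a b Hab.
rewrite !coefB !coef_emb.
have -> : (a < N)%N by lia.
have -> : (b < N)%N by lia.
have -> : (a < (i + j).+1)%N by lia.
have -> : (b < (i + j).+1)%N by lia.
by rewrite subrr.
Qed.

Lemma og_shP_eq t d (P Q : PP) a b : og d (P - Q) -> (a + b < d)%N -> (shP t P)`_a`_b = (shP t Q)`_a`_b.
Proof.
move=> H Hab; apply/eqP; rewrite -subr_eq0 -coefB -coefB -shP_sub; apply/eqP.
exact: (@og_shP t d _ H a b Hab).
Qed.

Lemma sh_mul t g h : sh t (pmul g h) = pmul (sh t g) (sh t h).
Proof.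
apply: ps_ext => i j; set N := (i + j).+1.
rewrite {1}/sh -/N (@og_shP_eq t N _ (emb N g * emb N h)); last by rewrite /N.
  rewrite {1}/shP comp_polyM -/(shP t (emb N g)) -/(shP t (emb N h)) coefPP_M /pmul.
  apply: eq_bigr => [[a Ha]] _; apply: eq_bigr => [[b Hb]] _ /=.
  by rewrite !sh_loc // /N; lia.
move=> a b Hab; rewrite !coefB coefPP_M coef_emb.
have -> : (a < N)%N by lia. have -> : (b < N)%N by lia.
rewrite /= /pmul; apply/eqP; rewrite subr_eq0; apply/eqP.
apply: eq_bigr => [[a' Ha']] _; apply: eq_bigr => [[b' Hb']] _ /=.
rewrite !coef_emb.
have -> : (a' < N)%N by lia. have -> : (b' < N)%N by lia.
have -> : (a - a' < N)%N by lia. have -> : (b - b' < N)%N by lia.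
by [].
Qed.

Lemma emb_add N g h : emb N (padd g h) = emb N g + emb N h.
Proof.
apply/polyP => a; rewrite coefD; apply/polyP => b.
by rewrite coefD !coef_emb /padd; case: ((a < N)%N && (b < N)%N); rewrite ?addr0.
Qed.

Lemma emb_scale N c g : emb N (pscale c g) = c%:P%:P * emb N g.
Proof.
apply/polyP => a; rewrite coefCM; apply/polyP => b.
by rewrite coefCM !coef_emb /pscale; case: ((a < N)%N && (b < N)%N); rewrite ?mulr0.
Qed.

Lemma emb_one N : (0 < N)%N -> emb N pone = 1.
Proof.
move=> HN; apply/polyP => a; apply/polyP => b.
rewrite coef_emb coef1 /pone /pconst.
case: a => [|a] /=; case: b => [|b] /=; rewrite ?HN ?coef1 ?coef0 //=.
  by case: (b.+1 < N)%N.
  by case: (a.+1 < N)%N.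
by case: (_ && _).
Qed.

Lemma sh_add t g h : sh t (padd g h) = padd (sh t g) (sh t h).
Proof. by apply: ps_ext => i j; rewrite /sh emb_add /shP comp_polyD !coefD. Qed.

Lemma sh_scale t c g : sh t (pscale c g) = pscale c (sh t g).
Proof. by apply: ps_ext => i j; rewrite /sh emb_scale /shP comp_polyM comp_polyC !coefCM. Qed.

Lemma sh_one t : sh t pone = pone.
Proof.
apply: ps_ext => i j; rewrite /sh emb_one // /shP -polyC1 comp_polyC polyC1.
rewrite coef1 /pone /pconst; case: i => [|i] /=; first by rewrite coef1; case: j.
by rewrite mulr0n coef0.
Qed.

Lemma shq_comp t : shq t \Po shq (- t) = 'X.
Proof.
rewrite /shq /Yv comp_polyD comp_polyX comp_polyM !comp_polyC.
rewrite !rmorphN /=; ring.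
Qed.

Lemma sh_inv t g : sh (- t) (sh t g) = g.
Proof.
apply: ps_ext => i j; set N := (i + j).+1.
rewrite {1}/sh -/N (@og_shP_eq (- t) N _ (shP t (emb N g))); last by rewrite /N.
  rewrite /shP -comp_polyA shq_comp comp_polyXr coef_emb /N.
  have -> : (i < (i + j).+1)%N by lia.
  by have -> : (j < (i + j).+1)%N by lia.
move=> a b Hab; rewrite !coefB coef_emb sh_loc //.
have -> : (a < N)%N by lia. have -> : (b < N)%N by lia.
by rewrite /= subrr.
Qed.

Lemma sh_aut t : is_aut (sh t).
Proof.
split; first exact: sh_add. split; first exact: sh_mul.
split; first exact: sh_scale. split; first exact: sh_one.
exists (sh (- t)); split => g; first exact: sh_inv.
by rewrite -{1}(opprK t) sh_inv.
Qed.

Definition cubPP (A B C D : F) : PP :=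
  A%:P%:P * 'X^3 * Yv^+0 + B%:P%:P * 'X^2 * Yv^+1 + C%:P%:P * 'X^1 * Yv^+2 + D%:P%:P * 'X^0 * Yv^+3.

Lemma coef_mon (c : F) m k a b :
  (c%:P%:P * 'X^m * Yv^+k)`_a`_b = if (a == m) && (b == k) then c else 0.
Proof.
rewrite /Yv -rmorphXn -mulrA [_ * (_ ^+ k)%:P]mulrC mulrA -polyCM coefMXn coefC.
case: (ltngtP a m) => Ham /=.
- by rewrite coef0.
- have -> : (a - m == 0)%N = false by apply/negbTE; rewrite subn_eq0 -ltnNge.
  by rewrite coef0.
- by rewrite Ham subnn /= coefCM coefXn; case: (b == k); rewrite ?mulr1 ?mulr0.
Qed.

Lemma coef_cubPP A B C D a b : (cubPP A B C D)`_a`_b =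
  (if (a == 3) && (b == 0) then A else 0) + (if (a == 2) && (b == 1) then B else 0) +
  (if (a == 1) && (b == 2) then C else 0) + (if (a == 0) && (b == 3) then D else 0).
Proof. by rewrite /cubPP !coefD !coef_mon. Qed.

Definition Tsh (t : F) (P : cub F) : cub F :=
  (P.1.1.1, 3%:R * t * P.1.1.1 + P.1.1.2,
   3%:R * t ^+ 2 * P.1.1.1 + 2%:R * t * P.1.1.2 + P.1.2,
   t ^+ 3 * P.1.1.1 + t ^+ 2 * P.1.1.2 + t * P.1.2 + P.2).

Lemma shP_cub t A B C D : shP t (cubPP A B C D) =
  cubPP A (3%:R * t * A + B) (3%:R * t ^+ 2 * A + 2%:R * t * B + C) (t ^+ 3 * A + t ^+ 2 * B + t * C + D).
Proof.
rewrite /shP /cubPP /Yv !(rmorphD, rmorphM, rmorphXn) /= comp_polyX !comp_polyC /shq /Yv.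
ring.
Qed.

Lemma sh_ok t : coord_ok (sh t) (Tsh t).
Proof.
split; first exact: sh_aut.
move=> g Hg; split.
  move=> i j Hij; rewrite -(@sh_loc t g i j 3) //.
  apply: (@og_shP t 3 _ _ i j Hij) => a b Hab; rewrite coef_emb.
  by case: ((a < 3)%N && (b < 3)%N) => //; rewrite Hg.
have key : forall i j, (i + j = 3)%N -> sh t g i j = (shP t (cubPP (g 3 0)%N (g 2 1)%N (g 1 2)%N (g 0 3)%N))`_i`_j.
  move=> i j Hij; rewrite -(@sh_loc t g i j 4); last lia.
  apply: (@og_shP_eq t 4); last lia.
  move=> a b Hab; rewrite coefB coefB coef_emb coef_cubPP.
  have Ha : (a < 4)%N by lia. have Hb : (b < 4)%N by lia.
  rewrite Ha Hb /=.
  move: a b Ha Hb Hab => [|[|[|[|a]]]] [|[|[|[|b]]]] //= _ _ Hab;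
   rewrite ?addr0 ?add0r ?subrr ?subr0 //; by apply: Hg.
rewrite /cubof /Tsh !key // !shP_cub !coef_cubPP /=.
by rewrite !addr0 !add0r.
Qed.

End Shear.
Arguments sh {F}. Arguments Tsh {F}.
Section Roots.
Variable F : closedFieldType.

Lemma monic_root (n : nat) (p : nat -> F) : (0 < n)%N ->
  exists x, x ^+ n = \sum_(i < n) p i * x ^+ i.
Proof. exact: solve_monicpoly. Qed.

Lemma root3 (p0 p1 p2 : F) : exists x, x ^+ 3 + p2 * x ^+ 2 + p1 * x + p0 = 0.
Proof.
have [x Hx] := @monic_root 3 (fun i => - [:: p0; p1; p2]`_i) erefl.
exists x; move: Hx; rewrite !big_ord_recl big_ord0 /= => ->.
rewrite /bump /=; ring.
Qed.

Lemma root2 (p0 p1 : F) : exists x, x ^+ 2 + p1 * x + p0 = 0.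
Proof.
have [x Hx] := @monic_root 2 (fun i => - [:: p0; p1]`_i) erefl.
exists x; move: Hx; rewrite !big_ord_recl big_ord0 /= => ->.
rewrite /bump /=; ring.
Qed.

Lemma root4 (p0 p1 p2 p3 : F) : exists x, x ^+ 4 + p3 * x ^+ 3 + p2 * x ^+ 2 + p1 * x + p0 = 0.
Proof.
have [x Hx] := @monic_root 4 (fun i => - [:: p0; p1; p2; p3]`_i) erefl.
exists x; move: Hx; rewrite !big_ord_recl big_ord0 /= => ->.
rewrite /bump /=; ring.
Qed.

Lemma cube_root (a : F) : exists x, x ^+ 3 = a.
Proof. have [x Hx] := root3 (- a) 0 0; exists x; move: Hx; rewrite !mul0r !addr0 => /eqP; rewrite subr_eq0 => /eqP. by []. Qed.

Lemma sqrt_ex (a : F) : exists x, x ^+ 2 = a.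
Proof. have [x Hx] := root2 (- a) 0; exists x; move: Hx; rewrite !mul0r !addr0 => /eqP; rewrite subr_eq0 => /eqP. by []. Qed.

Lemma cubic_root (a b c d : F) : (a != 0) || (b != 0) || (c != 0) ->
  exists t, a * t ^+ 3 + b * t ^+ 2 + c * t + d = 0.
Proof.
case: (eqVneq a 0) => Ha /=.
  case: (eqVneq b 0) => Hb /=.
    move=> Hc; exists (- d / c); rewrite Ha Hb; field; exact: Hc.
  move=> _; have [x Hx] := root2 (d / b) (c / b); exists x; rewrite Ha.
  have -> : 0 * x ^+ 3 + b * x ^+ 2 + c * x + d = b * (x ^+ 2 + c / b * x + d / b) by field.
  by rewrite Hx mulr0.
move=> _; have [x Hx] := root3 (d / a) (c / a) (b / a); exists x.
have -> : a * x ^+ 3 + b * x ^+ 2 + c * x + d = a * (x ^+ 3 + b / a * x ^+ 2 + c / a * x + d / a) by field.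
by rewrite Hx mulr0.
Qed.

End Roots.
Arguments root2 {F}. Arguments root3 {F}. Arguments root4 {F}. Arguments cube_root {F}. Arguments sqrt_ex {F}. Arguments cubic_root {F}.

Section Classif.
Variable F : closedFieldType.
Hypothesis h3 : (3%:R : F) = 0.

Lemma h2 : (2%:R : F) = -1.
Proof. apply/eqP; rewrite -subr_eq0 opprK; apply/eqP; ring: h3. Qed.

Lemma two_neq0 : (2%:R : F) != 0.
Proof. by rewrite h2 oppr_eq0 oner_neq0. Qed.

Definition lin (a b : F) (P Q : cub F) : cub F :=
  (a * P.1.1.1 + b * Q.1.1.1, a * P.1.1.2 + b * Q.1.1.2, a * P.1.2 + b * Q.1.2, a * P.2 + b * Q.2).

Definition NF (P Q : cub F) : Prop :=
     (P = (1,0,0,0) /\ Q = (0,0,0,0))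
  \/ (P = (1,0,0,0) /\ Q = (0,1,0,0))
  \/ (P = (1,0,0,0) /\ Q = (0,0,1,0))
  \/ (P = (1,0,0,0) /\ Q = (0,0,1,1))
  \/ (P = (1,0,0,0) /\ Q = (0,1,0,1))
  \/ (P = (1,0,0,0) /\ Q = (0,0,0,1))
  \/ (P = (0,1,0,0) /\ Q = (0,0,0,0))
  \/ (P = (0,1,0,0) /\ Q = (0,0,1,0))
  \/ (P = (0,1,0,0) /\ Q = (1,0,1,0))
  \/ (P = (0,1,0,0) /\ Q = (0,0,1,1))
  \/ (exists lam, lam != 1 /\ P = (1,1,0,0) /\ Q = (0,0,lam,1))
  \/ (P = (1,0,1,0) /\ Q = (0,0,0,0)).

Definition Good (P Q : cub F) := exists P' Q', NF P' Q' /\ Reach P Q P' Q'.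

Lemma Good_NF P Q : NF P Q -> Good P Q.
Proof. by move=> H; exists P, Q; split => //; exact: Reach_refl. Qed.


Lemma Good_step (P Q P' Q' : cub F) : Reach P Q P' Q' -> Good P' Q' -> Good P Q.
Proof. move=> H [R [S [HN HR]]]; exists R, S; split => //; exact: Reach_trans H HR. Qed.

Lemma RPen (a b c d : F) (P' Q' P Q : cub F) : a * d - b * c != 0 ->
  lin a b P Q = P' -> lin c d P Q = Q' -> Good P' Q' -> Good P Q.
Proof. move=> H <- <-; apply: Good_step; exact: Reach_pencil. Qed.

Lemma RSw (P Q : cub F) : Good (Tsw P) (Tsw Q) -> Good P Q.
Proof. apply: Good_step; apply: Reach_coord; exact: sw_ok. Qed.

Lemma RSc (al be : F) (P' Q' P Q : cub F) : al != 0 -> be != 0 ->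
  Tsc al be P = P' -> Tsc al be Q = Q' -> Good P' Q' -> Good P Q.
Proof. move=> Ha Hb <- <-; apply: Good_step; apply: Reach_coord; exact: sc_ok. Qed.

Lemma RSh (t : F) (P' Q' P Q : cub F) :
  Tsh t P = P' -> Tsh t Q = Q' -> Good P' Q' -> Good P Q.
Proof. move=> <- <-; apply: Good_step; apply: Reach_coord; exact: sh_ok. Qed.

Definition Tysh (t : F) (P : cub F) : cub F := Tsw (Tsh t (Tsw P)).

Lemma RYsh (t : F) (P' Q' P Q : cub F) :
  Tysh t P = P' -> Tysh t Q = Q' -> Good P' Q' -> Good P Q.
Proof. move=> <- <- H; apply: RSw; apply: (RSh t (Tsh t (Tsw P)) (Tsh t (Tsw Q))) => //; exact: RSw. Qed.

Lemma det_d (a c d : F) : a != 0 -> d != 0 -> a * d - 0 * c != 0.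
Proof. by move=> Ha Hd; rewrite mul0r subr0 mulf_neq0. Qed.
Lemma det_a (b c : F) : b != 0 -> c != 0 -> 0 * 0 - b * c != 0.
Proof. by move=> Hb Hc; rewrite mul0r sub0r oppr_eq0 mulf_neq0. Qed.
Lemma det_t (t : F) : t * 0 - 1 * 1 != 0.
Proof. by rewrite mulr0 mul1r sub0r oppr_eq0 oner_neq0. Qed.
Lemma one_ne : (1 : F) != 0. Proof. exact: oner_neq0. Qed.

Ltac nzs := repeat (apply/andP; split); rewrite ?mulf_neq0 ?expf_neq0 ?invr_neq0 ?two_neq0 ?oner_neq0 ?oppr_eq0 //.
Ltac fld := field; nzs.
Ltac c3 K := apply/eqP; rewrite -subr_eq0; apply/eqP; transitivity (3%:R * K); [ring | by rewrite h3 mul0r].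
Ltac r3 := apply/eqP; rewrite -subr_eq0; apply/eqP; ring: h3.
Ltac fld3 := apply/eqP; rewrite -subr_eq0; apply/eqP; field: h3; nzs.

Ltac teq := rewrite /lin /Tsc /Tsh /Tysh /Tsw /=; congr (_,_,_,_).

Lemma cls_cube (A B C D : F) : Good (1,0,0,0) (A,B,C,D).
Proof.
apply: (RPen 1 0 (- A) 1 (1,0,0,0) (0,B,C,D)); [by apply: det_d; rewrite ?one_ne | teq; ring | teq; ring |].
case: (eqVneq D 0) => HD.
  case: (eqVneq C 0) => HC.
    case: (eqVneq B 0) => HB.
      by apply: Good_NF; left; rewrite HB HC HD.
    apply: (RPen 1 0 0 (B^-1) (1,0,0,0) (0,1,0,0)); [by apply: det_d; rewrite ?one_ne ?invr_neq0 | teq; ring | teq; rewrite ?HC ?HD; try ring; fld |].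
    by apply: Good_NF; do 1 right; left.
  set s := - B / (2%:R * C).
  apply: (RYsh s (1,0,0,0) (s * B + s ^+ 2 * C, 0, C, 0)); [teq; r3 | teq; rewrite ?HD; try r3; rewrite /s; fld3 |].
  apply: (RPen 1 0 (- (s * B + s ^+ 2 * C) / C) (C^-1) (1,0,0,0) (0,0,1,0)); [by apply: det_d; rewrite ?one_ne ?invr_neq0 | teq; ring | teq; fld |].
  by apply: Good_NF; do 2 right; left.
case: (eqVneq C 0) => HC.
  case: (eqVneq B 0) => HB.
    apply: (RPen 1 0 0 (D^-1) (1,0,0,0) (0,0,0,1)); [by apply: det_d; rewrite ?one_ne ?invr_neq0 | teq; ring | teq; rewrite ?HB ?HC; fld |].
    by apply: Good_NF; do 5 right; left.
  have [al Hal] := sqrt_ex (D / B).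
  have Hal0 : al != 0 by apply/eqP => Ha; move: Hal; rewrite Ha expr0n /= => /eqP; rewrite eq_sym mulf_eq0 invr_eq0 (negbTE HD) (negbTE HB).
  apply: (RSc al 1 (al ^+ 3, 0, 0, 0) (0, D, 0, D)) => //; [by rewrite oner_neq0 | teq; ring | teq; rewrite ?HC; try ring; rewrite -[al ^+ 2 * 1]/(al ^+ 2 * 1) mulr1 Hal; fld |].
  apply: (RPen (al ^- 3) 0 0 (D^-1) (1,0,0,0) (0,1,0,1)); [by apply: det_d; rewrite ?one_ne ?invr_neq0 ?expf_neq0 | | |]. all: try (teq; fld).
  by apply: Good_NF; do 4 right; left.
set s := - B / (2%:R * C).
apply: (RYsh s (1,0,0,0) (s * B + s ^+ 2 * C + s ^+ 3 * D, 0, C, D)); [teq; r3 | teq; try r3; rewrite /s; fld3 |].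
set E := s * B + s ^+ 2 * C + s ^+ 3 * D.
apply: (RPen 1 0 (- E) 1 (1,0,0,0) (0,0,C,D)); [by apply: det_d; rewrite ?one_ne | teq; ring | teq; ring |].
set al := D / C.
have Hal0 : al != 0 by rewrite /al mulf_neq0 // invr_neq0.
apply: (RSc al 1 (al ^+ 3, 0, 0, 0) (0, 0, D, D)) => //; [by rewrite oner_neq0 | teq; ring | teq; rewrite /al; try ring; fld |].
apply: (RPen (al ^- 3) 0 0 (D^-1) (1,0,0,0) (0,0,1,1)); [by apply: det_d; rewrite ?one_ne ?invr_neq0 ?expf_neq0 | teq; fld | teq; fld |].
by apply: Good_NF; do 3 right; left.
Qed.

Lemma cls_cubeQ (Q : cub F) : Good (1,0,0,0) Q.
Proof. case: Q => [[[A B] C] D]; exact: cls_cube. Qed.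

Lemma cls_x2y (Q : cub F) : Good (0,1,0,0) Q.
Proof.
case: Q => [[[A B] C] D].
apply: (RPen 1 0 (- B) 1 (0,1,0,0) (A,0,C,D)); [by apply: det_d; rewrite ?one_ne | teq; ring | teq; ring |].
case: (eqVneq A 0) => HA.
  rewrite HA; case: (eqVneq D 0) => HD.
    rewrite HD; case: (eqVneq C 0) => HC.
      by rewrite HC; apply: Good_NF; do 6 right; left.
    apply: (RPen 1 0 0 (C^-1) (0,1,0,0) (0,0,1,0)); [by apply: det_d; rewrite ?one_ne ?invr_neq0 | teq; ring | teq; try ring; fld |].
    by apply: Good_NF; do 7 right; left.
  case: (eqVneq C 0) => HC.
    rewrite HC; apply: RSw.
    apply: (RPen 0 (D^-1) 1 0 (1,0,0,0) (0,0,1,0)); [by apply: det_a; rewrite ?one_ne ?invr_neq0 | teq; try ring; fld | teq; ring |].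
    by apply: Good_NF; do 2 right; left.
  set al := D / C.
  have Hal : al != 0 by rewrite /al mulf_neq0 // invr_neq0.
  apply: (RSc al 1 (0, al ^+ 2, 0, 0) (0, 0, D, D)) => //; [by rewrite one_ne | teq; ring | teq; rewrite /al; try ring; fld |].
  apply: (RPen (al ^- 2) 0 0 (D^-1) (0,1,0,0) (0,0,1,1)); [by apply: det_d; rewrite ?one_ne ?invr_neq0 ?expf_neq0 | teq; try ring; fld | teq; try ring; fld |].
  by apply: Good_NF; do 9 right; left.
case: (eqVneq D 0) => HD.
  rewrite HD; case: (eqVneq C 0) => HC.
    rewrite HC.
    apply: (RPen 0 (A^-1) 1 0 (1,0,0,0) (0,1,0,0)); [by apply: det_a; rewrite ?one_ne ?invr_neq0 | teq; try ring; fld | teq; ring |].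
    by apply: Good_NF; do 1 right; left.
  have [be Hbe] := sqrt_ex (A / C).
  have Hbe0 : be != 0.
    apply/eqP => Hb; move: Hbe; rewrite Hb expr0n /= => /eqP; rewrite eq_sym mulf_eq0 invr_eq0 (negbTE HA) (negbTE HC) //.
  apply: (RSc 1 be (0, be, 0, 0) (A, 0, A, 0)) => //; [by rewrite one_ne | teq; ring | teq; try ring; rewrite mul1r Hbe; fld |].
  apply: (RPen (be^-1) 0 0 (A^-1) (0,1,0,0) (1,0,1,0)); [by apply: det_d; rewrite ?one_ne ?invr_neq0 | teq; try ring; fld | teq; try ring; fld |].
  by apply: Good_NF; do 8 right; left.
have [al Hal] := cube_root (A^-1).
have [be Hbe] := cube_root (D^-1).
have Hal0 : al != 0.
  apply/eqP => Ha; move: Hal; rewrite Ha expr0n /= => /eqP; rewrite eq_sym invr_eq0 (negbTE HA) //.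
have Hbe0 : be != 0.
  apply/eqP => Hb; move: Hbe; rewrite Hb expr0n /= => /eqP; rewrite eq_sym invr_eq0 (negbTE HD) //.
set b := al * be ^+ 2 * C.
apply: (RSc al be (0, al ^+ 2 * be, 0, 0) (1, 0, b, 1)) => //;
  [teq; ring | teq; rewrite ?Hal ?Hbe /b; try ring; fld |].
apply: (RPen ((al ^+ 2 * be)^-1) 0 0 1 (0,1,0,0) (1,0,b,1)); [by apply: det_d; rewrite ?one_ne ?invr_neq0 ?mulf_neq0 ?expf_neq0 | teq; try ring; fld | teq; ring |].
have [l Hl] := root3 (b ^+ 3) (- b ^+ 3) 0.
have Hl1 : l != 1.
  apply/eqP => E; have : (1 : F) = 0 by rewrite -Hl E; ring.
  by move/eqP; rewrite oner_eq0.
have [g [Hg0 [Hg3 Hgb]]] : exists g, g != 0 /\ g ^+ 3 = l - 1 /\ g * b = l.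
  case: (eqVneq l 0) => Hl0.
    have Hb : b = 0.
      by move: Hl; rewrite Hl0 expr0n /= mul0r mulr0 !add0r => /eqP; rewrite expf_eq0 /= => /eqP.
    exists (-1); split; first by rewrite oppr_eq0 one_ne.
    by rewrite Hb Hl0 mulr0; split => //; ring.
  have Hb : b != 0.
    apply/eqP => Hb; move: Hl; rewrite Hb expr0n /= oppr0 !mul0r !addr0 => /eqP; rewrite expf_eq0 /= (negbTE Hl0) //.
  exists (l / b); split; first by rewrite mulf_neq0 // invr_neq0.
  split; last by field.
  apply/eqP; rewrite -subr_eq0; apply/eqP.
  have -> : (l / b) ^+ 3 - (l - 1) = (l ^+ 3 + 0 * l ^+ 2 + - b ^+ 3 * l + b ^+ 3) / b ^+ 3 by field.
  by rewrite Hl mul0r.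
apply: (RSc g 1 (0, g ^+ 2, 0, 0) (l - 1, 0, l, 1)) => //; [by rewrite one_ne | teq; ring | teq; rewrite ?Hg3 -?Hgb; ring |].
apply: (RPen (g ^- 2) 0 0 1 (0,1,0,0) (l - 1, 0, l, 1)); [by apply: det_d; rewrite ?one_ne ?invr_neq0 ?expf_neq0 | teq; try ring; fld | teq; ring |].
apply: (RYsh 1 (1,1,0,0) (2%:R * l, 2%:R * l, l, 1)); [teq; r3 | teq; r3 |].
apply: (RPen 1 0 (- (2%:R * l)) 1 (1,1,0,0) (0,0,l,1)); [by apply: det_d; rewrite ?one_ne | teq; ring | teq; ring |].
apply: Good_NF; do 10 right; left; by exists l.
Qed.

Lemma cls_x3xy2 (Q : cub F) : Good (1,0,1,0) Q.
Proof.
case: Q => [[[A B] C0] D].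
apply: (RPen 1 0 (- A) 1 (1,0,1,0) (0,B,C0 - A,D)); [by apply: det_d; rewrite ?one_ne | teq; ring | teq; ring |].
move: (C0 - A) => C.
have [HBC|HBC] : ((B == 0) && (C == 0)) \/ ((B != 0) || (C != 0)).
  by case: (B == 0); case: (C == 0); auto.
  case/andP: HBC => /eqP HB /eqP HC; rewrite HB HC.
  case: (eqVneq D 0) => HD.
    by rewrite HD; apply: Good_NF; do 11 right.
  apply: RSw.
  apply: (RPen 0 (D^-1) 1 0 (1,0,0,0) (0,1,0,1)); [by apply: det_a; rewrite ?one_ne ?invr_neq0 | teq; try ring; fld | teq; ring |].
  by apply: Good_NF; do 4 right; left.
have [u Hu] : exists u, B * u ^+ 4 - C * u ^+ 3 - B * u ^+ 2 + D = 0.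
  case: (eqVneq B 0) => HB.
    have HC : C != 0 by move: HBC; rewrite HB eqxx.
    have [u Hu] := cube_root (D / C); exists u; rewrite HB.
    have -> : 0 * u ^+ 4 - C * u ^+ 3 - 0 * u ^+ 2 + D = - C * u ^+ 3 + D by ring.
    rewrite Hu; fld.
  have [u Hu] := root4 (D / B) 0 (-1) (- C / B); exists u.
  have -> : B * u ^+ 4 - C * u ^+ 3 - B * u ^+ 2 + D
      = B * (u ^+ 4 + - C / B * u ^+ 3 + -1 * u ^+ 2 + 0 * u + D / B) by field.
  by rewrite Hu mulr0.
set t := B * u - C.
apply: (RPen t 1 1 0 (t, B, t + C, D) (1,0,1,0)); [exact: det_t | teq; ring | teq; ring |].
have E1 : Tsh u (t, B, t + C, D) = (t, B, 0, 0).
  rewrite /Tsh /t /=; congr (_,_,_,_).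
  - by c3 (u * (B * u - C)).
  - by c3 (u ^+ 2 * (B * u - C) + u * B).
  - transitivity (B * u ^+ 4 - C * u ^+ 3 - B * u ^+ 2 + D + 3%:R * (B * u ^+ 2)); first ring.
    by rewrite Hu h3 mul0r addr0.
have E2 : Tsh u (1, 0, 1, 0) = (1, 0, 1, u ^+ 3 + u).
  rewrite /Tsh /=; congr (_,_,_,_).
  - by c3 u.
  - by c3 (u ^+ 2).
  - ring.
apply: (RSh u (t, B, 0, 0) (1, 0, 1, u ^+ 3 + u)) => //.
case: (eqVneq B 0) => HB.
  have Ht : t != 0.
    have HC : C != 0 by move: HBC; rewrite HB eqxx.
    by rewrite /t HB mul0r sub0r oppr_eq0.
  rewrite HB.
  apply: (RPen (t^-1) 0 0 1 (1,0,0,0) (1, 0, 1, u ^+ 3 + u)); [by apply: det_d; rewrite ?one_ne ?invr_neq0 | teq; try ring; fld | teq; ring |].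
  exact: cls_cubeQ.
set s := - t / B.
apply: (RYsh s (0, B, 0, 0) (Tysh s (1, 0, 1, u ^+ 3 + u))); [teq; rewrite /s; try r3; fld3 | by [] |].
apply: (RPen (B^-1) 0 0 1 (0,1,0,0) (lin 0 1 (0, B, 0, 0) (Tysh s (1, 0, 1, u ^+ 3 + u)))); [by apply: det_d; rewrite ?one_ne ?invr_neq0 | teq; try ring; fld | by [] |].
exact: cls_x2y.
Qed.

Lemma cls_one0 (A B C : F) (Q : cub F) : (A != 0) || (B != 0) || (C != 0) -> Good (A,B,C,0) Q.
Proof.
move=> HP.
case: (eqVneq C 0) => HC.
  rewrite HC; case: (eqVneq B 0) => HB.
    have HA : A != 0 by move: HP; rewrite HB HC eqxx orbF orbF.
    rewrite HB.
    apply: (RPen (A^-1) 0 0 1 (1,0,0,0) (lin 0 1 (A,0,0,0) Q)); [by apply: det_d; rewrite ?one_ne ?invr_neq0 | teq; try ring; fld | by [] |].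
    exact: cls_cubeQ.
  set s := - A / B.
  apply: (RYsh s (0, B, 0, 0) (Tysh s Q)); [teq; rewrite /s; try r3; fld3 | by [] |].
  apply: (RPen (B^-1) 0 0 1 (0,1,0,0) (lin 0 1 (0, B, 0, 0) (Tysh s Q))); [by apply: det_d; rewrite ?one_ne ?invr_neq0 | teq; try ring; fld | by [] |].
  exact: cls_x2y.
set s := - B / (2%:R * C).
set E := A + s * B + s ^+ 2 * C.
apply: (RYsh s (E, 0, C, 0) (Tysh s Q)); [teq; rewrite /E /s; try r3; fld3 | by [] |].
case: (eqVneq E 0) => HE.
  rewrite HE; apply: RSw.
  apply: (RPen (C^-1) 0 0 1 (0,1,0,0) (lin 0 1 (Tsw (0, 0, C, 0)) (Tsw (Tysh s Q)))); [by apply: det_d; rewrite ?one_ne ?invr_neq0 | teq; try ring; fld | by [] |].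
  exact: cls_x2y.
have [be Hbe] := sqrt_ex (E / C).
have Hbe0 : be != 0.
  apply/eqP => Hb; move: Hbe; rewrite Hb expr0n /= => /eqP; rewrite eq_sym mulf_eq0 invr_eq0 (negbTE HE) (negbTE HC) //.
apply: (RSc 1 be (E, 0, E, 0) (Tsc 1 be (Tysh s Q))) => //; [by rewrite one_ne | teq; try ring; rewrite mul1r Hbe; fld | ].
apply: (RPen (E^-1) 0 0 1 (1,0,1,0) (lin 0 1 (E, 0, E, 0) (Tsc 1 be (Tysh s Q)))); [by apply: det_d; rewrite ?one_ne ?invr_neq0 | teq; try ring; fld | by [] |].
exact: cls_x3xy2.
Qed.

Lemma cls_one (A B C D : F) (Q : cub F) : (A != 0) || (B != 0) || (C != 0) || (D != 0) -> Good (A,B,C,D) Q.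
Proof.
move=> HP.
case: (eqVneq D 0) => HD.
  rewrite HD; apply: cls_one0; move: HP; rewrite HD eqxx orbF //.
have [HABC|HABC] : ((A == 0) && (B == 0) && (C == 0)) \/ ((A != 0) || (B != 0) || (C != 0)).
  by case: (A == 0); case: (B == 0); case: (C == 0); auto.
  case/andP: HABC => /andP [/eqP HA /eqP HB] /eqP HC; rewrite HA HB HC.
  apply: RSw.
  apply: (RPen (D^-1) 0 0 1 (1,0,0,0) (lin 0 1 (Tsw (0,0,0,D)) (Tsw Q))); [by apply: det_d; rewrite ?one_ne ?invr_neq0 | teq; try ring; fld | by [] |].
  exact: cls_cubeQ.
have [t Ht] := cubic_root A B C D HABC.
apply: (RSh t (A, B, 2%:R * t * B + C, 0) (Tsh t Q)); [teq; try r3 | by [] |].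
  transitivity (A * t ^+ 3 + B * t ^+ 2 + C * t + D); last exact: Ht.
  ring.
apply: cls_one0.
case/orP: HABC => [/orP [H|H]|H]; rewrite ?H ?orbT //.
case: (eqVneq A 0) => HA; rewrite ?HA //=.
case: (eqVneq B 0) => HB; rewrite ?HB //=.
by rewrite mulr0 add0r H.
Qed.

Lemma classify (P Q : cub F) : P != (0,0,0,0) \/ Q != (0,0,0,0) -> Good P Q.
Proof.
have nz : forall (R : cub F), R != (0,0,0,0) -> (R.1.1.1 != 0) || (R.1.1.2 != 0) || (R.1.2 != 0) || (R.2 != 0).
  case=> [[[a b] c] d] /=; apply: contraR; rewrite !negb_or !negbK.
  by case/andP => /andP [/andP [/eqP -> /eqP ->] /eqP ->] /eqP ->.
case: (eqVneq P (0,0,0,0)) => HP; last first.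
  move=> _; move: (nz _ HP); case: P {HP} => [[[a b] c] d] /= H; exact: cls_one.
case=> // HQ.
apply: (RPen 0 1 1 0 Q P); [by rewrite mulr0 mul1r sub0r oppr_eq0 one_ne | | |].
  by rewrite HP; case: Q {HQ} => [[[a b] c] d]; teq; ring.
  by case: P HP => [[[a b] c] d] _; teq; ring.
move: (nz _ HQ); case: Q {HQ} => [[[a b] c] d] /= H; exact: cls_one.
Qed.

End Classif.
Arguments NF {F}. Arguments Good {F}. Arguments classify {F}.

Section Final.
Variable F : closedFieldType.
Local Notation ps := (ps F).

Lemma jet_eq3 (u v : ps) : in_mpow 3 u -> in_mpow 3 v -> cubof u = cubof v ->
  forall i j, (i + j <= 3)%N -> u i j = v i j.
Proof.
move=> Hu Hv E i j Hij.
case: (ltnP (i + j) 3) => H; first by rewrite Hu // Hv.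
move: E; rewrite /cubof => [[E1 E2 E3 E4]].
have Hi : (i <= 3)%N by lia.
have Hj : j = (3 - i)%N by lia.
rewrite Hj; move: Hi; case: i {Hij H Hj} => [|[|[|[|i]]]] //= _.
Qed.

Lemma mono_mpow a b : (a + b = 3)%N -> in_mpow 3 (@mono F a b).
Proof.
move=> Hab i j Hij; rewrite /mono; case: eqP => [Ha|] //=; case: eqP => [Hb|] //=.
lia.
Qed.

Lemma padd_mpow (u v : ps) : in_mpow 3 u -> in_mpow 3 v -> in_mpow 3 (padd u v).
Proof. by move=> Hu Hv i j H; rewrite /padd Hu // Hv // addr0. Qed.

Lemma pscale_mpow c (u : ps) : in_mpow 3 u -> in_mpow 3 (pscale c u).
Proof. by move=> Hu i j H; rewrite /pscale Hu // mulr0. Qed.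

Lemma pzero_mpow : in_mpow 3 (@pzero F).
Proof. by []. Qed.

Lemma NF_nf (P Q : cub F) : NF P Q -> exists g : 'I_2 -> ps,
  nf_list g /\ in_mpow 3 (g o0) /\ in_mpow 3 (g o1) /\ cubof (g o0) = P /\ cubof (g o1) = Q.
Proof.
have m30 := @mono_mpow 3 0 erefl. have m21 := @mono_mpow 2 1 erefl.
have m12 := @mono_mpow 1 2 erefl. have m03 := @mono_mpow 0 3 erefl.
have pz := pzero_mpow.
rewrite /NF => H.
case: H => [[-> ->]|H].
exists (vec2 (mono 3 0) pzero); split; first by left.
  by rewrite /vec2 /=; split => //; split => //; split; rewrite /cubof /mono.
case: H => [[-> ->]|H].
exists (vec2 (mono 3 0) (mono 2 1)); split; first by right; left.
  by rewrite /vec2 /=; split => //; split => //; split; rewrite /cubof /mono.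
case: H => [[-> ->]|H].
exists (vec2 (mono 3 0) (mono 1 2)); split; first by do 2 right; left.
  by rewrite /vec2 /=; split => //; split => //; split; rewrite /cubof /mono.
case: H => [[-> ->]|H].
exists (vec2 (mono 3 0) (padd (mono 0 3) (mono 1 2))); split; first by do 3 right; left.
  rewrite /vec2 /=; split => //; split; first exact: padd_mpow.
  by split; rewrite /cubof /mono /padd /= ?addr0 ?add0r.
case: H => [[-> ->]|H].
exists (vec2 (mono 3 0) (padd (mono 0 3) (mono 2 1))); split; first by do 4 right; left.
  rewrite /vec2 /=; split => //; split; first exact: padd_mpow.
  by split; rewrite /cubof /mono /padd /= ?addr0 ?add0r.
case: H => [[-> ->]|H].
exists (vec2 (mono 3 0) (mono 0 3)); split; first by do 5 right; left.
  by rewrite /vec2 /=; split => //; split => //; split; rewrite /cubof /mono.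
case: H => [[-> ->]|H].
exists (vec2 (mono 2 1) pzero); split; first by do 6 right; left.
  by rewrite /vec2 /=; split => //; split => //; split; rewrite /cubof /mono.
case: H => [[-> ->]|H].
exists (vec2 (mono 2 1) (mono 1 2)); split; first by do 7 right; left.
  by rewrite /vec2 /=; split => //; split => //; split; rewrite /cubof /mono.
case: H => [[-> ->]|H].
exists (vec2 (mono 2 1) (padd (mono 3 0) (mono 1 2))); split; first by do 8 right; left.
  rewrite /vec2 /=; split => //; split; first exact: padd_mpow.
  by split; rewrite /cubof /mono /padd /= ?addr0 ?add0r.
case: H => [[-> ->]|H].
exists (vec2 (mono 2 1) (padd (mono 0 3) (mono 1 2))); split; first by do 9 right; left.
  rewrite /vec2 /=; split => //; split; first exact: padd_mpow.
  by split; rewrite /cubof /mono /padd /= ?addr0 ?add0r.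
case: H => [[l [Hl [-> ->]]]|[-> ->]].
exists (vec2 (padd (mono 3 0) (mono 2 1)) (padd (mono 0 3) (pscale l (mono 1 2)))).
  split; first by do 10 right; left; exists l.
  rewrite /vec2 /=; split; first exact: padd_mpow.
  split; first by apply: padd_mpow => //; exact: pscale_mpow.
  by split; rewrite /cubof /mono /padd /pscale /= ?mulr0 ?mulr1 ?addr0 ?add0r.
exists (vec2 (padd (mono 3 0) (mono 1 2)) pzero); split; first by do 11 right.
  rewrite /vec2 /=; split; first exact: padd_mpow.
  by split => //; split; rewrite /cubof /mono /padd /= ?addr0 ?add0r.
Qed.

End Final.

Lemma main_aux (F : closedFieldType) (hchar : 3%N \in [pchar F]%R)
  (f : 'I_2 -> ps F) :
  ICIS f -> unimodal f -> ord_eq3 f ->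
  exists g : 'I_2 -> ps F, nf_list g /\ Korbit 3 (jet 3 f) (jet 3 g).
Proof.
move=> _ _ [f0 [f1 fn]].
have h3 : (3%:R : F) = 0 := pcharf0 hchar.
have nz : cubof (f o0) != (0,0,0,0) \/ cubof (f o1) != (0,0,0,0).
  case: (eqVneq (cubof (f o0)) (0,0,0,0)) => H0; last by left.
  case: (eqVneq (cubof (f o1)) (0,0,0,0)) => H1; last by right.
  exfalso; apply: fn; split => i j Hij.
    apply: (@jet_eq3 F (f o0) (@pzero F) f0 (@pzero_mpow F)); [by rewrite H0 | lia].
  apply: (@jet_eq3 F (f o1) (@pzero F) f1 (@pzero_mpow F)); [by rewrite H1 | lia].
have [P' [Q' [HN [a [b [c [d [phi [Hdet [Haut HR]]]]]]]]]] := classify h3 _ _ nz.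
have [g [Hg [g0 [g1 [gP gQ]]]]] := @NF_nf F _ _ HN.
exists g; split => //.
exists f, (cm a b c d), phi; split => //; split; first exact: GL2_cm.
split => //.
have [k0 [k1 [kP kQ]]] := HR f f0 f1 erefl erefl.
apply: functional_extensionality => [[[[k i] j] Hij]].
rewrite /jet /=.
case: (I2_cases k) => ->.
  by apply: jet_eq3 => //; rewrite gP kP.
by apply: jet_eq3 => //; rewrite gQ kQ.
Qed.

Local Close Scope ring_scope.

Theorem proposition7p1 (F : closedFieldType) (hchar : 3%N \in [pchar F]%R)
  (f : 'I_2 -> ps F) :
  ICIS f -> unimodal f -> ord_eq3 f ->
  exists g : 'I_2 -> ps F, nf_list g /\ Korbit 3 (jet 3 f) (jet 3 g).
Proof. exact: main_aux. Qed.
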